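(* Let $(N,\langle\cdot,\cdot\rangle,\varphi)$ be a modified $H$-type group (see context). The metric $\langle\cdot,\cdot\rangle$ is a nilsoliton if and only if the derived algebra $[\mathfrak v,\mathfrak v]$ is contained in a single eigenspace of $\mathrm{Rc}|_{\mathfrak z}$.
   Context: Let $N$ be a 2-step nilpotent real Lie group with Lie algebra $\mathfrak n$, Lie bracket $[\cdot,\cdot]$ and center $\mathfrak z$, endowed with a left-invariant pseudo-Riemannian metric $\langle\cdot,\cdot\rangle$ for which $\mathfrak z$ is nondegenerate. Put $\mathfrak v=\mathfrak z^\perp$. For $z\in\mathfrak z$ define $j(z)\in\mathrm{End}(\mathfrak v)$ by $\langle [x,y],z\rangle=\langle y,j(z)x\rangle$ for all $x,y\in\mathfrak v$. Given a quadratic form $\varphi$ on $\mathfrak z$, $(N,\langle\cdot,\cdot\rangle,\varphi)$ is a modified $H$-type group if $j(z)^2=-\varphi(z)\,\mathrm{Id}_{\mathfrak v}$ for all $z\in\mathfrak z$. The Ricci operator $\mathrm{Rc}:\mathfrak n\to\mathfrak n$ is defined by $\langle\mathrm{Rc}\,u,w\rangle=\mathrm{Ric}(u,w)$; it maps $\mathfrak z$ to $\mathfrak z$. The metric is a nilsoliton if there is a constant $c\in\mathbb R$ such that $D=\mathrm{Rc}+c\,\mathrm{Id}_{\mathfrak n}$ is a derivation of $\mathfrak n$, i.e. $D[u,w]=[Du,w]+[u,Dw]$ for all $u,w\in\mathfrak n$. *)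

(* Defs.v *)
(* The Lie algebra n is modelled as R^n = 'rV[R]_n with an
   abstract bracket; the left-invariant metric is a symmetric invertible
   Gram matrix g.  All curvature notions of the left-invariant metric are
   computed algebraically on the Lie algebra (Koszul formula). *)
From HB Require Import structures.
From mathcomp Require Import all_boot all_order all_algebra.
From mathcomp Require Import reals.
Set Implicit Arguments. Unset Strict Implicit. Unset Printing Implicit Defensive.
Import Order.TTheory GRing.Theory Num.Theory.
Local Open Scope ring_scope.

Section Defs.
Variables (R : fieldType) (n : nat).
Implicit Types (g : 'M[R]_n) (x y z u w : 'rV[R]_n).
Variable br : 'rV[R]_n -> 'rV[R]_n -> 'rV[R]_n.

(* the (possibly indefinite) inner product <x,y> = x g y^T *)
Definition ip g x y : R := (x *m g *m y^T) 0 0.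

Definition ev (i : 'I_n) : 'rV[R]_n := delta_mx 0 i.

Definition riesz g (f : 'rV[R]_n -> R) : 'rV[R]_n :=
  (\row_i f (ev i)) *m invmx g.

Definition two_step_nilpotent : Prop :=
  [/\ (forall a x y z, br (a *: x + y) z = a *: br x z + br y z),
      (forall x y, br x y = - br y x),
      (forall x y z, br (br x y) z = 0) &
      (exists x y, br x y != 0)].

Definition center z : Prop := forall x, br z x = 0.

Definition vpart g x : Prop := forall z, center z -> ip g x z = 0.

Definition center_nondeg g : Prop :=
  forall z, center z -> (forall w, center w -> ip g z w = 0) -> z = 0.

(* Levi-Civita connection of the left-invariant metric (Koszul formula):
   <nabla_x y, w> = 1/2 (<[x,y],w> - <[y,w],x> + <[w,x],y>) *)
Definition nabla g x y : 'rV[R]_n :=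
  riesz g (fun w => 2^-1 * (ip g (br x y) w - ip g (br y w) x + ip g (br w x) y)).

Definition curv g x y z : 'rV[R]_n :=
  nabla g x (nabla g y z) - nabla g y (nabla g x z) - nabla g (br x y) z.

Definition ric g y z : R := \sum_(i < n) (curv g (ev i) y z) 0 i.

Definition Rc g u : 'rV[R]_n := riesz g (fun w => ric g u w).

Definition derivation (D : 'rV[R]_n -> 'rV[R]_n) : Prop :=
  forall u w, D (br u w) = br (D u) w + br u (D w).

Definition nilsoliton g : Prop :=
  exists c : R, derivation (fun u => Rc g u + c *: u).

(* quadratic form on R^n given by a matrix Q (restricted to z in the statement) *)
Definition qform (Q : 'M[R]_n) z : R := (z *m Q *m z^T) 0 0.

End Defs.

(* Main.v *)
Require Import Defs.
From HB Require Import structures.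
From mathcomp Require Import all_boot all_order all_algebra.
From mathcomp Require Import reals ring lra zify.
Set Implicit Arguments. Unset Strict Implicit. Unset Printing Implicit Defensive.
Import Order.TTheory GRing.Theory Num.Theory.
Local Open Scope ring_scope.

Section Basic.
Variables (R : realType) (n : nat) (g : 'M[R]_n).
Hypothesis gsym : g^T = g.
Hypothesis gunit : g \in unitmx.

Definition flin (f : 'rV[R]_n -> R) := forall a x y, f (a *: x + y) = a * f x + f y.
Definition vlin m (L : 'rV[R]_n -> 'rV[R]_m) := forall a x y, L (a *: x + y) = a *: L x + L y.

Lemma flin0 f : flin f -> f 0 = 0.
Proof. move=> hf; have := hf 1 0 0; rewrite addr0 scaler0 mul1r => e.
by apply: (addrI (f 0)); rewrite addr0 -e. Qed.

Lemma flin_sum f : flin f -> forall x, f x = \sum_(i < n) x 0 i * f (ev R i).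
Proof.
move=> hf x; rewrite {1}(row_sum_delta x).
apply: (big_rec2 (fun a b => f a = b)); first exact: flin0.
by move=> i a b _ <-; rewrite hf.
Qed.

Lemma vlin0 m (L : 'rV[R]_n -> 'rV[R]_m) : vlin L -> L 0 = 0.
Proof. move=> hf; have := hf 1 0 0; rewrite addr0 scaler0 scale1r => e.
by apply: (addrI (L 0)); rewrite addr0 -e. Qed.

Definition matof m (L : 'rV[R]_n -> 'rV[R]_m) : 'M[R]_(n, m) := \matrix_i L (ev R i).

Lemma vlin_mx m (L : 'rV[R]_n -> 'rV[R]_m) : vlin L -> forall x, L x = x *m matof L.
Proof.
move=> hf x; rewrite mulmx_sum_row {1}(row_sum_delta x).
apply: (big_rec2 (fun a b => L a = b)); first exact: vlin0.
by move=> i a b _ <-; rewrite hf rowK.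
Qed.

Lemma vlinD m (L : 'rV[R]_n -> 'rV[R]_m) : vlin L -> forall x y, L (x + y) = L x + L y.
Proof. by move=> h x y; rewrite -{1}(scale1r x) h scale1r. Qed.
Lemma vlinZ m (L : 'rV[R]_n -> 'rV[R]_m) : vlin L -> forall a x, L (a *: x) = a *: L x.
Proof. by move=> h a x; rewrite -(addr0 (a *: x)) h vlin0 // addr0. Qed.
Lemma vlinN m (L : 'rV[R]_n -> 'rV[R]_m) : vlin L -> forall x, L (- x) = - L x.
Proof. by move=> h x; rewrite -scaleN1r vlinZ // scaleN1r. Qed.
Lemma vlinB m (L : 'rV[R]_n -> 'rV[R]_m) : vlin L -> forall x y, L (x - y) = L x - L y.
Proof. by move=> h x y; rewrite vlinD // vlinN. Qed.

Lemma ipDl a x y w : ip g (a *: x + y) w = a * ip g x w + ip g y w.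
Proof. by rewrite /ip !mulmxDl -!scalemxAl !mxE. Qed.
Lemma ipDr a x y w : ip g w (a *: x + y) = a * ip g w x + ip g w y.
Proof. by rewrite /ip linearD linearZ /= mulmxDr -scalemxAr !mxE. Qed.
Lemma ip_sym x y : ip g x y = ip g y x.
Proof.
rewrite /ip (_ : x *m g *m y^T = (y *m g *m x^T)^T) ?mxE //.
by rewrite !trmx_mul trmxK gsym mulmxA.
Qed.
Lemma ip_ev x i : ip g x (ev R i) = (x *m g) 0 i.
Proof. by rewrite /ip /ev trmx_delta -colE mxE. Qed.
Lemma ev_mx_ev (A : 'M[R]_n) i j : (ev R i *m A *m (ev R j)^T) 0 0 = A i j.
Proof. by rewrite /ev trmx_delta -colE -rowE !mxE. Qed.

Lemma ip0l y : ip g 0 y = 0. Proof. by rewrite /ip !mul0mx mxE. Qed.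
Lemma ip0r y : ip g y 0 = 0. Proof. by rewrite /ip linear0 mulmx0 mxE. Qed.
Lemma ipNl x y : ip g (- x) y = - ip g x y.
Proof. by rewrite -scaleN1r -(addr0 (_ *: _)) ipDl ip0l addr0 mulN1r. Qed.
Lemma ipNr x y : ip g y (- x) = - ip g y x.
Proof. by rewrite ip_sym ipNl ip_sym. Qed.
Lemma ipAl x y w : ip g (x + y) w = ip g x w + ip g y w.
Proof. by rewrite -{1}(scale1r x) ipDl mul1r. Qed.
Lemma ipAr x y w : ip g w (x + y) = ip g w x + ip g w y.
Proof. by rewrite -{1}(scale1r x) ipDr mul1r. Qed.
Lemma ipBl x y w : ip g (x - y) w = ip g x w - ip g y w.
Proof. by rewrite ipAl ipNl. Qed.
Lemma ipBr x y w : ip g w (x - y) = ip g w x - ip g w y.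
Proof. by rewrite ipAr ipNr. Qed.
Lemma ipZl a x w : ip g (a *: x) w = a * ip g x w.
Proof. by rewrite -(addr0 (_ *: _)) ipDl ip0l addr0. Qed.
Lemma ipZr a x w : ip g w (a *: x) = a * ip g w x.
Proof. by rewrite -(addr0 (_ *: _)) ipDr ip0r addr0. Qed.

Lemma ip_nondeg p : (forall y, ip g p y = 0) -> p = 0.
Proof.
move=> h; have pg : p *m g = 0 by apply/rowP => i; rewrite -ip_ev h mxE.
by rewrite -(mulmxK gunit p) pg mul0mx.
Qed.

Lemma riesz_ext f h : (forall w, f w = h w) -> riesz g f = riesz g h.
Proof. by move=> e; rewrite /riesz; congr (_ *m _); apply/rowP => i; rewrite !mxE e. Qed.
Lemma riesz_lin a f h : riesz g (fun w => a * f w + h w) = a *: riesz g f + riesz g h.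
Proof.
rewrite /riesz scalemxAl -mulmxDl; congr (_ *m _); apply/rowP => i; by rewrite !mxE.
Qed.
Lemma riesz0 : riesz g (fun _ => 0) = 0.
Proof. rewrite /riesz; have -> : \row_i (0 : R) = 0 :> 'rV_n by apply/rowP => i; rewrite !mxE.
by rewrite mul0mx. Qed.
Lemma riesz_ip a : riesz g (ip g a) = a.
Proof.
rewrite /riesz; have -> : \row_i ip g a (ev R i) = a *m g by apply/rowP => i; rewrite mxE ip_ev.
exact: mulmxK.
Qed.
Lemma ip_riesz f y : flin f -> ip g (riesz g f) y = f y.
Proof.
move=> hf; rewrite /ip /riesz -!mulmxA (mulmxA (invmx g)) mulVmx // mul1mx.
rewrite (flin_sum hf) mxE; apply: eq_bigr => i _; rewrite !mxE mulrC; done.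
Qed.
Lemma ip_riesz_r f y : flin f -> ip g y (riesz g f) = f y.
Proof. by move=> hf; rewrite ip_sym ip_riesz. Qed.

Definition trf (L : 'rV[R]_n -> 'rV[R]_n) := \sum_(i < n) (L (ev R i)) 0 i.
Lemma trf_mx L : trf L = \tr (matof L).
Proof. by rewrite /trf /mxtrace; apply: eq_bigr => i _; rewrite mxE. Qed.
Lemma trf_ext L1 L2 : (forall x, L1 x = L2 x) -> trf L1 = trf L2.
Proof. by move=> e; rewrite /trf; apply: eq_bigr => i _; rewrite e. Qed.
Lemma trfD L1 L2 : trf (fun x => L1 x + L2 x) = trf L1 + trf L2.
Proof. by rewrite /trf -big_split; apply: eq_bigr => i _; rewrite mxE. Qed.
Lemma trfB L1 L2 : trf (fun x => L1 x - L2 x) = trf L1 - trf L2.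
Proof. by rewrite /trf -sumrB; apply: eq_bigr => i _; rewrite !mxE. Qed.
Lemma trfZ a L : trf (fun x => a *: L x) = a * trf L.
Proof. by rewrite /trf mulr_sumr; apply: eq_bigr => i _; rewrite mxE. Qed.
Lemma trfN L : trf (fun x => - L x) = - trf L.
Proof. by rewrite /trf -sumrN; apply: eq_bigr => i _; rewrite mxE. Qed.
Lemma trf0 : trf (fun _ => 0) = 0.
Proof. by rewrite /trf big1 // => i _; rewrite mxE. Qed.

Lemma trf_comm A B : vlin A -> vlin B -> trf (fun x => A (B x)) = trf (fun x => B (A x)).
Proof.
move=> hA hB; rewrite !trf_mx.
have e : forall (A B : 'rV_n -> 'rV_n), vlin A -> vlin B -> matof (fun x => A (B x)) = matof B *m matof A.
  move=> A' B' hA' hB'; apply/row_matrixP => i; rewrite rowK row_mul rowK.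
  by rewrite (vlin_mx hA').
rewrite (e A B hA hB) (e B A hB hA). exact: mxtrace_mulC.
Qed.

Lemma trf_skew L : vlin L -> (forall x y, ip g (L x) y = - ip g x (L y)) -> trf L = 0.
Proof.
move=> hL hs; rewrite trf_mx; set M := matof L.
have eM : M *m g = - (g *m M^T).
  apply/matrixP => i j; rewrite -ev_mx_ev -[RHS]ev_mx_ev.
  have h := hs (ev R i) (ev R j); rewrite /ip !(vlin_mx hL) in h.
  rewrite !mulmxA h trmx_mul mulmxN mulNmx !mulmxA.
  by rewrite [in RHS]mxE.
have : \tr M = - \tr M.
  rewrite -{1}(mulmxK gunit M) eM mulNmx raddfN /= mxtrace_mulC mulmxA.
  by rewrite mulVmx // mul1mx mxtrace_tr.
move=> h; lra.
Qed.

End Basic.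

Lemma mxD_E (R : realType) n (A B : 'rV[R]_n) i : (A + B) 0 i = A 0 i + B 0 i. Proof. by rewrite mxE. Qed.
Lemma mxN_E (R : realType) n (A : 'rV[R]_n) i : (- A) 0 i = - A 0 i. Proof. by rewrite mxE. Qed.
Lemma mxZ_E (R : realType) n (a : R) (A : 'rV[R]_n) i : (a *: A) 0 i = a * A 0 i. Proof. by rewrite mxE. Qed.
Lemma mx0_E (R : realType) n i : (0 : 'rV[R]_n) 0 i = 0. Proof. by rewrite mxE. Qed.
Ltac vring := apply/rowP => ?; rewrite ?(mxD_E, mxN_E, mxZ_E, mx0_E); ring.

Lemma vlin_comp (R : realType) n (A B : 'rV[R]_n -> 'rV[R]_n) : vlin A -> vlin B -> vlin (fun x => A (B x)).
Proof. by move=> hA hB a x y; rewrite hB hA. Qed.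

Section Lie.
Variables (R : realType) (n : nat) (br : 'rV[R]_n -> 'rV[R]_n -> 'rV[R]_n) (g : 'M[R]_n).
Hypothesis gsym : g^T = g.
Hypothesis gunit : g \in unitmx.
Hypothesis brL : forall a x y z, br (a *: x + y) z = a *: br x z + br y z.
Hypothesis brA : forall x y, br x y = - br y x.
Hypothesis brN : forall x y z, br (br x y) z = 0.
Hypothesis hnd : center_nondeg br g.

Lemma brR a x y z : br z (a *: x + y) = a *: br z x + br z y.
Proof. by rewrite !(brA z) brL opprD scalerN. Qed.
Lemma vlin_brl z : vlin (fun x => br x z). Proof. by move=> a x y; rewrite brL. Qed.
Lemma vlin_brr z : vlin (br z). Proof. by move=> a x y; rewrite brR. Qed.

Lemma center_br x y : center br (br x y). Proof. by move=> z; apply: brN. Qed.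
Lemma br_xc x c : center br c -> br x c = 0.
Proof. by move=> hc; rewrite brA hc oppr0. Qed.
Lemma cen_lin a c c' : center br c -> center br c' -> center br (a *: c + c').
Proof. by move=> h h' x; rewrite brL h h' scaler0 addr0. Qed.
Lemma cen0 : center br 0.
Proof. by move=> x; rewrite (vlin0 (vlin_brl x)). Qed.
Lemma cenN c : center br c -> center br (- c).
Proof. move=> h; rewrite -scaleN1r -(addr0 (_ *: _)); apply: cen_lin => //; exact: cen0. Qed.
Lemma cenD c c' : center br c -> center br c' -> center br (c + c').
Proof. by move=> h h'; rewrite -(scale1r c); apply: cen_lin. Qed.
Lemma cenB c c' : center br c -> center br c' -> center br (c - c').
Proof. by move=> h h'; apply: cenD => //; apply: cenN. Qed.
Lemma cenZ a c : center br c -> center br (a *: c).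
Proof. move=> h; rewrite -(addr0 (_ *: _)); apply: cen_lin => //; exact: cen0. Qed.

Lemma vp_lin a x y : vpart br g x -> vpart br g y -> vpart br g (a *: x + y).
Proof. by move=> h h' c hc; rewrite ipDl h // h' // mulr0 addr0. Qed.
Lemma vp0 : vpart br g 0. Proof. by move=> c _; rewrite ip0l. Qed.
Lemma vpB x y : vpart br g x -> vpart br g y -> vpart br g (x - y).
Proof. by move=> h h' c hc; rewrite ipBl h // h' // subr0. Qed.
Lemma cv0 c : center br c -> vpart br g c -> c = 0.
Proof. by move=> hc hv; apply: hnd => // w hw; apply: hv. Qed.

Definition J a b := riesz g (fun w => ip g (br b w) a).
Lemma flin_J a b : flin (fun w => ip g (br b w) a).
Proof. by move=> k x y; rewrite brR ipDl. Qed.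
Lemma ip_J a b w : ip g (J a b) w = ip g (br b w) a.
Proof. exact: ip_riesz (flin_J a b). Qed.
Lemma J_vlin_l b : vlin (fun a => J a b).
Proof.
move=> k x y; rewrite /J -riesz_lin; apply: riesz_ext => w; by rewrite ipDr.
Qed.
Lemma J_vlin_r a : vlin (J a).
Proof.
move=> k x y; rewrite /J -riesz_lin; apply: riesz_ext => w; by rewrite brL ipDl.
Qed.
Lemma J_v a b : vpart br g a -> J a b = 0.
Proof.
move=> ha; rewrite /J -(riesz0 g); apply: riesz_ext => w.
by rewrite ip_sym // ha //; apply: center_br.
Qed.
Lemma J_c a c : center br c -> J a c = 0.
Proof. move=> hc; rewrite /J -(riesz0 g); apply: riesz_ext => w; by rewrite hc ip0l. Qed.
Lemma J_in_v a b : vpart br g (J a b).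
Proof. by move=> c hc; rewrite ip_J br_xc // ip0l. Qed.
Lemma J_skew c x y : ip g (J c x) y = - ip g x (J c y).
Proof. by rewrite ip_J (ip_sym gsym x) ip_J brA ipNl. Qed.

Definition N x y := 2^-1 *: (br x y - J x y - J y x).
Lemma nablaE x y : nabla br g x y = N x y.
Proof.
rewrite /nabla -[RHS](riesz_ip gunit); apply: riesz_ext => w.
rewrite /N ipZl !ipBl !ip_J (brA w x) ipNl.
rewrite (ip_sym gsym (br x w)) (ip_sym gsym (br y w)) ?(ip_sym gsym w); done.
Qed.

Lemma N_lin_r x : vlin (N x).
Proof.
move=> k y y'; rewrite /N brR (J_vlin_r x) (J_vlin_l x); vring.
Qed.
Lemma N_lin_l y : vlin (fun x => N x y).
Proof.
move=> k x x'; rewrite /N brL (J_vlin_r y) (J_vlin_l y); vring.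
Qed.

Variable Pm : 'M[R]_n.
Hypothesis HP : forall x, center br (x *m Pm) /\ vpart br g (x - x *m Pm).
Definition P (x : 'rV[R]_n) : 'rV[R]_n := x *m Pm.
Lemma PC x : center br (P x). Proof. exact: (HP x).1. Qed.
Lemma Pv x : vpart br g (x - P x). Proof. exact: (HP x).2. Qed.
Lemma P_lin : vlin P.
Proof. by move=> a x y; rewrite /P mulmxDl scalemxAl. Qed.
Lemma P_c c : center br c -> P c = c.
Proof.
move=> hc; apply/eqP; rewrite eq_sym -subr_eq0; apply/eqP; apply: cv0; last exact: Pv.
by apply: cenB => //; apply: PC.
Qed.
Lemma P_v x : vpart br g x -> P x = 0.
Proof.
move=> hx; apply: cv0; first exact: PC.
have -> : P x = x - (x - P x) by vring.
by apply: vpB => //; apply: Pv.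
Qed.
Lemma J_P a b : J a b = J (P a) b.
Proof.
apply/eqP; rewrite -subr_eq0; apply/eqP.
by rewrite -(vlinB (J_vlin_l b)) J_v //; apply: Pv.
Qed.
Lemma ip_P x c : center br c -> ip g (P x) c = ip g x c.
Proof.
move=> hc; have := Pv x hc; rewrite ipBl => /eqP; rewrite subr_eq0 => /eqP ->; done.
Qed.
Lemma ip_decomp d y : ip g d y = ip g d (y - P y) + ip g d (P y).
Proof. by rewrite -ipAr; congr ip; vring. Qed.

Lemma trf_cv L : vlin L -> (forall x, center br (L x)) -> (forall x, L (P x) = 0) -> trf L = 0.
Proof.
move=> hL hc h0.
have hQ : vlin (fun y => y - P y) by move=> a x y; rewrite P_lin; vring.
rewrite (trf_ext (L2 := fun x => L (x - P x))); last by move=> x; rewrite (vlinB hL) h0 subr0.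
rewrite (trf_comm hL hQ) (trf_ext (L2 := fun _ => 0)) ?trf0 // => x.
by rewrite P_c ?subrr.
Qed.
Lemma trf_zv L : vlin L -> (forall x, vpart br g (L x)) -> (forall x, L x = L (P x)) -> trf L = 0.
Proof.
move=> hL hv h0.
rewrite (trf_ext (L2 := fun x => L (P x))) //.
rewrite (trf_comm hL P_lin) (trf_ext (L2 := fun _ => 0)) ?trf0 // => x.
by rewrite P_v.
Qed.

Lemma N_cr x c : center br c -> N x c = - (2^-1) *: J c x.
Proof. by move=> hc; rewrite /N (br_xc x hc) (J_c x hc); vring. Qed.
Lemma N_cl x c : center br c -> N c x = - (2^-1) *: J c x.
Proof. by move=> hc; rewrite /N hc (J_c x hc); vring. Qed.
Lemma N_vr x a : vpart br g a -> N x a = 2^-1 *: (br x a - J x a).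
Proof. by move=> ha; rewrite /N (J_v _ ha); vring. Qed.
Lemma N_vv a b : vpart br g a -> vpart br g b -> N a b = 2^-1 *: br a b.
Proof. by move=> ha hb; rewrite /N (J_v _ ha) (J_v _ hb); vring. Qed.

Lemma curvE x u w : curv br g x u w = N x (N u w) - N u (N x w) - N (br x u) w.
Proof. by rewrite /curv !nablaE. Qed.

Lemma curv_vv x u w : vpart br g u -> vpart br g w ->
  curv br g x u w = - (2^-1 * 2^-1) *: J (br u w) x + (2^-1 * 2^-1) *: br u (J x w)
    + (2^-1 * 2^-1) *: J (br x w) u + 2^-1 *: J (br x u) w.
Proof.
move=> hu hw; rewrite curvE (N_vv hu hw) (vlinZ (N_lin_r x)) (N_cr _ (center_br u w)).
rewrite (N_vr _ hw) (vlinZ (N_lin_r u)) (vlinB (N_lin_r u)) (N_cr _ (center_br x w)).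
rewrite (N_vv hu (J_in_v x w)) (N_cl _ (center_br x u)); vring.
Qed.

Lemma curv_vc x u c : vpart br g u -> center br c ->
  curv br g x u c = - (2^-1 * 2^-1) *: br x (J c u) + (2^-1 * 2^-1) *: J x (J c u)
    + (2^-1 * 2^-1) *: br u (J c x).
Proof.
move=> hu hc; rewrite curvE (N_cr _ hc) (vlinZ (N_lin_r x)) (N_vr _ (J_in_v c u)).
rewrite (N_cr _ hc) (vlinZ (N_lin_r u)) (N_vv hu (J_in_v c x)).
rewrite (N_cr _ hc) (J_c _ (center_br x u)); vring.
Qed.

Lemma curv_cv x c u : center br c -> vpart br g u ->
  curv br g x c u = - (2^-1 * 2^-1) *: br x (J c u) + (2^-1 * 2^-1) *: J x (J c u)
    - (2^-1 * 2^-1) *: J c (J x u).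
Proof.
move=> hc hu; rewrite curvE (N_cl _ hc) (vlinZ (N_lin_r x)) (N_vr _ (J_in_v c u)).
rewrite (N_vr _ hu) (vlinZ (N_lin_r c)) (vlinB (N_lin_r c)) (N_cl _ hc) (N_cl _ hc).
rewrite (J_c _ (center_br x u)) (br_xc _ hc) (vlin0 (N_lin_l u)); vring.
Qed.

Lemma ric_trf u w : ric br g u w = trf (fun x => curv br g x u w).
Proof. by []. Qed.

Lemma ric_vc u c : vpart br g u -> center br c -> ric br g u c = 0.
Proof.
move=> hu hc; rewrite ric_trf (trf_ext (fun x => curv_vc x hu hc)) !trfD !trfZ.
rewrite (trf_cv (vlin_brl _) (fun x => center_br x _) (fun x => PC x _)).
rewrite (trf_zv (J_vlin_l _) (fun x => J_in_v x _) (fun x => J_P x _)).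
rewrite (trf_cv (vlin_comp (vlin_brr u) (J_vlin_r c)) (fun x => center_br u _)); first ring.
by move=> x; rewrite (J_c _ (PC x)) (vlin0 (vlin_brr u)).
Qed.

Lemma ric_cv c u : center br c -> vpart br g u -> ric br g c u = 0.
Proof.
move=> hc hu; rewrite ric_trf (trf_ext (fun x => curv_cv x hc hu)) trfB trfD !trfZ.
rewrite (trf_cv (vlin_brl _) (fun x => center_br x _) (fun x => PC x _)).
rewrite (trf_zv (J_vlin_l _) (fun x => J_in_v x _) (fun x => J_P x _)).
rewrite (trf_zv (vlin_comp (J_vlin_r c) (J_vlin_l u)) (fun x => J_in_v c _)); first ring.
by move=> x; rewrite (J_P x u).
Qed.

Definition T u w := trf (fun x => br u (J x w)).

Lemma ric_vv0 u w : vpart br g u -> vpart br g w ->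
  ric br g u w = - (2^-1 * 2^-1) * (T u w + T w u).
Proof.
move=> hu hw; rewrite ric_trf (trf_ext (fun x => curv_vv x hu hw)) !trfD !trfZ.
rewrite (trf_skew gunit (J_vlin_r _) (J_skew _)).
have e1 : trf (fun x => J (br x w) u) = trf (fun x => br (J x u) w) := trf_comm (J_vlin_l u) (vlin_brl w).
have e2 : trf (fun x => J (br x u) w) = trf (fun x => br (J x w) u) := trf_comm (J_vlin_l w) (vlin_brl u).
rewrite e1 e2.
rewrite (trf_ext (L1 := fun x => br (J x u) w) (L2 := fun x => - br w (J x u))) ?trfN; last by move=> x; rewrite brA.
rewrite (trf_ext (L1 := fun x => br (J x w) u) (L2 := fun x => - br u (J x w))) ?trfN; last by move=> x; rewrite brA.
by rewrite /T; field.
Qed.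

Variables (Q : 'M[R]_n) (j : 'rV[R]_n -> 'rV[R]_n -> 'rV[R]_n).
Hypothesis hj : forall z x, center br z -> vpart br g x ->
     vpart br g (j z x) /\
     (forall y, vpart br g y -> ip g (br x y) z = ip g y (j z x)).
Hypothesis htype : forall z x, center br z -> vpart br g x -> j z (j z x) = - qform Q z *: x.

Definition beta (c c' : 'rV[R]_n) : R := ((c *m Q *m c'^T) + (c' *m Q *m c^T)) 0 0.

Lemma qpol c c' : qform Q (c + c') = beta c c' + qform Q c + qform Q c'.
Proof.
rewrite /qform /beta linearD /= !mulmxDl !mulmxDr !mxD_E; ring.
Qed.

Lemma flin_beta c : flin (fun y => beta c (P y)).
Proof.
move=> k y y'; rewrite /beta P_lin linearD linearZ /= !mulmxDl !mulmxDr.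
rewrite -!scalemxAl -!scalemxAr !mxD_E !mxZ_E; ring.
Qed.

Lemma Jj c x : center br c -> vpart br g x -> J c x = j c x.
Proof.
move=> hc hx; apply/eqP; rewrite -subr_eq0; apply/eqP; apply: (ip_nondeg gunit) => y.
rewrite ip_decomp (vpB (J_in_v c x) (hj hc hx).1 (PC y)) addr0.
rewrite ipBl ip_J (hj hc hx).2; last exact: Pv.
by rewrite (ip_sym gsym (j c x)) subrr.
Qed.

Lemma Jpol c c' w : center br c -> center br c' -> vpart br g w ->
  J c' (J c w) + J c (J c' w) = - beta c c' *: w.
Proof.
move=> hc hc' hw.
have e1 : forall d, center br d -> J d (J d w) = - qform Q d *: w.
  by move=> d hd; rewrite (Jj hd hw) (Jj hd (hj hd hw).1); exact: htype.
have := e1 (c + c') (cenD hc hc').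
rewrite !(vlinD (J_vlin_l _)) !(vlinD (J_vlin_r _)) (e1 c hc) (e1 c' hc') qpol => H.
apply/rowP => i; move/rowP: H => /(_ i); rewrite ?(mxD_E, mxN_E, mxZ_E, mx0_E) => H.
lra.
Qed.

Definition Nm x := P (riesz g (fun y => beta (P x) (P y))).

Lemma Tsum x u w : vpart br g u -> vpart br g w ->
  br u (J x w) + br w (J x u) = ip g u w *: Nm x.
Proof.
move=> hu hw; apply/eqP; rewrite -subr_eq0; apply/eqP; apply: cv0.
  by apply: cenB; [apply: cenD; apply: center_br | apply: cenZ; apply: PC].
move=> c' hc'; rewrite ipBl ipAl ipZl -!ip_J (J_P x w) (J_P x u).
have hc := PC x; set c := P x.
rewrite (ip_sym gsym (J c' w)) !J_skew.
rewrite [X in X - _ = 0](_ : _ = - ip g u (J c' (J c w) + J c (J c' w))); last by rewrite ipAr opprD.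
rewrite (Jpol hc hc' hw) ipZr /Nm (ip_P _ hc') (ip_riesz gunit _ (flin_beta c)) (P_c hc').
ring.
Qed.

Definition aa := - (2^-1 * 2^-1) * trf Nm.

Lemma ric_vv u w : vpart br g u -> vpart br g w -> ric br g u w = aa * ip g u w.
Proof.
move=> hu hw; rewrite ric_vv0 // /T -trfD (trf_ext (fun x => Tsum x hu hw)) trfZ /aa; ring.
Qed.

Lemma lin3_aux (k : R) (a b c a' b' c' : 'rV[R]_n) :
  k *: a + a' - (k *: b + b') - (k *: c + c') = k *: (a - b - c) + (a' - b' - c').
Proof. vring. Qed.
Lemma curv_lin2 x u : vlin (fun w => curv br g x u w).
Proof. move=> k w w'; rewrite !curvE (N_lin_r u) (N_lin_r x) (N_lin_r x k w) (N_lin_r u) (N_lin_r (br x u)).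
exact: lin3_aux. Qed.
Lemma curv_lin1 x w : vlin (fun u => curv br g x u w).
Proof. move=> k u u'; rewrite !curvE (N_lin_l w) (N_lin_r x) (N_lin_l (N x w)) brR (N_lin_l w).
exact: lin3_aux. Qed.
Lemma ric_flin2 u : flin (ric br g u).
Proof.
move=> k w w'; rewrite !ric_trf (trf_ext (fun x => curv_lin2 x u k w w')) trfD trfZ //.
Qed.
Lemma ric_flin1 w k u u' : ric br g (k *: u + u') w = k * ric br g u w + ric br g u' w.
Proof.
by rewrite !ric_trf (trf_ext (fun x => curv_lin1 x w k u u')) trfD trfZ.
Qed.

Lemma Rc_lin : vlin (Rc br g).
Proof.
move=> k u u'; rewrite /Rc -riesz_lin; apply: riesz_ext => w; exact: ric_flin1.
Qed.

Lemma ric_split u y : ric br g u y = ric br g u (y - P y) + ric br g u (P y).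
Proof. by rewrite -(mul1r (ric br g u (y - P y))) -ric_flin2 scale1r subrK. Qed.

Lemma Rc_v x : vpart br g x -> Rc br g x = aa *: x.
Proof.
move=> hx; apply/eqP; rewrite -subr_eq0; apply/eqP; apply: (ip_nondeg gunit) => y.
rewrite ipBl /Rc (ip_riesz gunit _ (ric_flin2 x)) ric_split (ric_vv hx (Pv y)).
rewrite (ric_vc hx (PC y)) ipZl (ip_decomp x y) (hx _ (PC y)); ring.
Qed.

Lemma Rc_c c : center br c -> center br (Rc br g c).
Proof.
move=> hc; have e : Rc br g c - P (Rc br g c) = 0.
  apply: (ip_nondeg gunit) => y.
  rewrite ip_decomp (Pv _ (PC y)) addr0 ipBl /Rc (ip_riesz gunit _ (ric_flin2 c)).
  rewrite (ric_cv hc (Pv y)) (ip_sym gsym (P _)) (Pv y (PC _)) subrr //.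
have -> : Rc br g c = P (Rc br g c) by apply/eqP; rewrite -subr_eq0 e.
exact: PC.
Qed.

Lemma br_dec u w : br u w = br (u - P u) (w - P w).
Proof.
by rewrite (vlinB (vlin_brr _)) !(vlinB (vlin_brl _)) (br_xc _ (PC w)) (br_xc _ (PC w)) (PC u) !subr0.
Qed.

Lemma lin_aux2 (a c0 : R) (u p r : 'rV[R]_n) :
  a *: (u - p) + r + c0 *: u = (a + c0) *: (u - p) + (r + c0 *: p).
Proof. vring. Qed.
Lemma Dbr c0 u w : br (Rc br g u + c0 *: u) w = (aa + c0) *: br (u - P u) (w - P w).
Proof.
have hR : Rc br g u = aa *: (u - P u) + Rc br g (P u).
  by rewrite -(Rc_v (Pv u)) -(vlinD Rc_lin) subrK.
have e : Rc br g u + c0 *: u = (aa + c0) *: (u - P u) + (Rc br g (P u) + c0 *: P u).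
  by rewrite hR; apply: lin_aux2.
rewrite e brL (cenD (Rc_c (PC u)) (cenZ _ (PC u))) addr0; congr (_ *: _).
by rewrite (vlinB (vlin_brr _)) (br_xc _ (PC w)) subr0.
Qed.

End Lie.

Lemma proj_exists (R : realType) (n : nat) (br : 'rV[R]_n -> 'rV[R]_n -> 'rV[R]_n) (g : 'M[R]_n) :
  (forall a x y z, br (a *: x + y) z = a *: br x z + br y z) ->
  (forall x y, br x y = - br y x) ->
  center_nondeg br g ->
  exists Pm : 'M[R]_n, forall x, center br (x *m Pm) /\ vpart br g (x - x *m Pm).
Proof.
move=> brL brA hnd.
pose F (z : 'rV[R]_n) : 'rV[R]_(n * n) := mxvec (\matrix_i br z (ev R i)).
have hF : vlin F.
  move=> a x y; rewrite /F -linearP /=; congr mxvec; apply/row_matrixP => i.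
  by rewrite !rowK linearD linearZ /= !rowK brL.
set M := matof F.
have hcen : forall z, center br z <-> z *m M = 0.
  move=> z; rewrite -(vlin_mx hF); split.
    move=> hz; rewrite /F; have -> : \matrix_i br z (ev R i) = 0.
      by apply/row_matrixP => i; rewrite rowK row0 hz.
    exact: linear0.
  move=> hz x; rewrite (vlin_mx (vlin_brr brL brA z)).
  have -> : matof (br z) = 0; last by rewrite mulmx0.
  apply/row_matrixP => i; rewrite rowK row0.
  have : \matrix_i br z (ev R i) = 0 by apply: (can_inj mxvecK); rewrite linear0.
  by move/row_matrixP => /(_ i); rewrite rowK row0.
have hZ : forall z, center br z <-> (z <= kermx M)%MS.
  by move=> z; rewrite hcen sub_kermx; split => [->|/eqP].
move: (kermx M) hZ => Z hZ.
set A := Z *m g *m Z^T.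
have kAZ : (kermx A <= kermx Z)%MS.
  apply/row_subP => i; set d := row i (kermx A).
  have dA : d *m A = 0 by apply/eqP; rewrite -sub_kermx row_sub.
  rewrite sub_kermx; apply/eqP; apply: hnd; first by apply/hZ; apply: submxMl.
  move=> w /hZ /submxP [d' ->].
  rewrite /ip trmx_mul !mulmxA.
  have -> : d *m Z *m g *m Z^T = d *m A by rewrite /A !mulmxA.
  by rewrite dA !mul0mx mxE.
have rZA : (\rank Z <= \rank A)%N.
  have := mxrankS kAZ; rewrite !mxrank_ker.
  have := rank_leq_row A; have := rank_leq_row Z; lia.
have sAZ : (A <= Z^T)%MS by apply: submxMl.
have sZA : (Z^T <= A)%MS.
  rewrite -(mxrank_leqif_sup sAZ).2 eqn_leq (mxrankS sAZ) mxrank_tr rZA //.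
have [W hW] := submxP sZA.
exists (g *m W *m Z) => x; split.
  by apply/hZ; rewrite mulmxA; apply: submxMl.
move=> c /hZ /submxP [d' ->].
have e : (x - x *m (g *m W *m Z)) *m g *m Z^T = 0.
  rewrite !mulmxBl; apply/eqP; rewrite subr_eq0; apply/eqP.
  by rewrite -!mulmxA (mulmxA Z g) -/A -hW.
move: e; rewrite !mulmxA => e; by rewrite /ip trmx_mul !mulmxA e mul0mx mxE.
Qed.

Lemma vec_eq_aux (R : realType) n (X Y : 'rV[R]_n) (r c0 a : R) :
  X + c0 *: Y = (a + c0) *: Y + (a + c0) *: Y -> X = (2 * a + c0) *: Y.
Proof.
move/rowP => H; apply/rowP => i; have := H i; rewrite ?(mxD_E, mxN_E, mxZ_E, mx0_E) => Hi.
lra.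
Qed.

Lemma vec_eq_aux2 (R : realType) n (X Y : 'rV[R]_n) (lam c0 a : R) :
  X = lam *: Y -> c0 = lam - 2 * a -> X + c0 *: Y = (a + c0) *: Y + (a + c0) *: Y.
Proof.
move=> -> ->; apply/rowP => i; rewrite ?(mxD_E, mxN_E, mxZ_E, mx0_E); ring.
Qed.

Unset Implicit Arguments.
Set Strict Implicit.

Theorem theorem4p10 (R : realType) (n : nat)
    (br : 'rV[R]_n -> 'rV[R]_n -> 'rV[R]_n) (g Q : 'M[R]_n)
    (j : 'rV[R]_n -> 'rV[R]_n -> 'rV[R]_n) :
  two_step_nilpotent br ->
  g^T = g -> g \in unitmx ->
  center_nondeg br g ->
  (* j(z) in End(v) defined by <[x,y],z> = <y, j(z)x> for x, y in v *)
  (forall z x, center br z -> vpart br g x ->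
     vpart br g (j z x) /\
     (forall y, vpart br g y -> ip g (br x y) z = ip g y (j z x))) ->
  (* modified H-type: j(z)^2 = - phi(z) Id_v *)
  (forall z x, center br z -> vpart br g x -> j z (j z x) = - qform Q z *: x) ->
  (nilsoliton br g <->
   exists lam : R, forall x y, vpart br g x -> vpart br g y ->
     Rc br g (br x y) = lam *: br x y).
Proof.
move=> [brL brA brN _] gsym gunit hnd hj htype.
have [Pm HP] := proj_exists brL brA hnd.
have Db := Dbr gsym gunit brL brA brN hnd HP hj htype.
set a := aa g Pm Q in Db.
have key : forall c0 u w, br (Rc br g u + c0 *: u) w + br u (Rc br g w + c0 *: w)
    = (a + c0) *: br u w + (a + c0) *: br u w.
  move=> c0 u w.
  by rewrite Db (brA u) Db (brA (w - _)) scalerN opprK -(br_dec brL brA HP).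
split.
  move=> [c0 hD]; exists (2 * a + c0) => x y hx hy.
  have := hD x y; rewrite /= key; exact: vec_eq_aux.
move=> [lam hl]; exists (lam - 2 * a) => u w /=.
rewrite key (br_dec brL brA HP u w).
apply: vec_eq_aux2 => //.
by apply: hl; apply: Pv.
Qed.
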